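(* Let $A$ be an associative (not necessarily unital) algebra over a field $F$, let $n\ge 1$, $\sigma\in S_n$, and $q\in F$ with $q\neq 1$. If $A$ satisfies the identity $x_1\cdots x_n=q\,x_{\sigma(1)}\cdots x_{\sigma(n)}$, then $A$ is nilpotent, i.e. there is $m$ such that $a_1\cdots a_m=0$ for all $a_1,\dots,a_m\in A$.
   Context: $A$ satisfies the identity $x_1\cdots x_n=q\,x_{\sigma(1)}\cdots x_{\sigma(n)}$ means $a_1\cdots a_n=q\,a_{\sigma(1)}\cdots a_{\sigma(n)}$ for all $a_1,\dots,a_n\in A$. *)

(* Defs.v *)
From HB Require Import structures.
From mathcomp Require Import all_boot all_order all_algebra all_fingroup.
Set Implicit Arguments. Unset Strict Implicit. Unset Printing Implicit Defensive.
Import GRing.Theory.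
Local Open Scope ring_scope.

(* A (not necessarily unital) associative F-algebra is given as an
   F-vector space A (lmodType F) together with a bilinear associative
   multiplication mul : A -> A -> A. *)
Definition bilinear_mul (F : fieldType) (A : lmodType F) (mul : A -> A -> A) :=
  (forall (c : F) (x y z : A), mul (c *: x + y) z = c *: mul x z + mul y z) /\
  (forall (c : F) (x y z : A), mul z (c *: x + y) = c *: mul z x + mul z y).

Definition assoc_mul (A : Type) (mul : A -> A -> A) :=
  forall x y z, mul x (mul y z) = mul (mul x y) z.

(* Product x_1 (x_2 (... x_k)) of a nonempty list; the empty product is
   (by convention, never used for nonempty lists) 0. *)
Fixpoint nprod (F : fieldType) (A : lmodType F) (mul : A -> A -> A) (s : seq A) : A :=
  match s with
  | [::] => 0
  | [:: x] => x
  | x :: s' => mul x (nprod mul s')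
  end.

Definition alg_prod (F : fieldType) (A : lmodType F) (mul : A -> A -> A) (k : nat)
  (a : 'I_k -> A) : A := nprod mul [seq a i | i <- enum 'I_k].

(* Main.v *)
Require Import Defs.
From HB Require Import structures.
From mathcomp Require Import all_boot all_order all_algebra all_fingroup.
From mathcomp Require Import zify.
Import GRing.Theory.
Local Open Scope ring_scope.
Set Implicit Arguments. Unset Strict Implicit.

Lemma P_cons (F : fieldType) (A : lmodType F) (mul : A -> A -> A) x s :
  s != [::] -> nprod mul (x :: s) = mul x (nprod mul s).
Proof. by case: s. Qed.

Lemma P_merge (F : fieldType) (A : lmodType F) (mul : A -> A -> A) :
  assoc_mul mul -> forall x y r,
  nprod mul (x :: y :: r) = nprod mul (mul x y :: r).
Proof. by move=> Has x y [|z r] //=; rewrite Has. Qed.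

Lemma P_cat (F : fieldType) (A : lmodType F) (mul : A -> A -> A) :
  assoc_mul mul -> forall s1 s2, s1 != [::] -> s2 != [::] ->
  nprod mul (s1 ++ s2) = mul (nprod mul s1) (nprod mul s2).
Proof.
move=> Has; elim=> [//|x [|y s1] IH] s2 _ ne2; first by rewrite cat1s P_cons.
rewrite cat_cons P_cons // IH // [in RHS]P_cons //.
Qed.

Lemma ne_cc (T : eqType) (l : seq T) x r : l ++ x :: r != [::].
Proof. by case: l. Qed.

Lemma P_merge_in (F : fieldType) (A : lmodType F) (mul : A -> A -> A) :
  assoc_mul mul -> forall l x y r,
  nprod mul (l ++ x :: y :: r) = nprod mul (l ++ mul x y :: r).
Proof.
move=> Has; elim=> [|a l IH] x y r; first exact: P_merge.
by rewrite !cat_cons !P_cons ?ne_cc // IH.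
Qed.

Lemma set_nth_ne (T : eqType) (x0 : T) s m y : set_nth x0 s m y != [::].
Proof. by case: s; case: m. Qed.

Definition ins {T : Type} (k : nat) (z : T) (s : seq T) := take k s ++ z :: drop k s.

Lemma Lset1 (F : fieldType) (A : lmodType F) (mul : A -> A -> A) :
  assoc_mul mul -> forall t m z, (m < size t)%N ->
  nprod mul (set_nth 0 t m (mul z (nth 0 t m))) = nprod mul (ins m z t).
Proof.
move=> Has; elim=> [//|x t IH] [|m] z Hm.
  by rewrite /ins /=; case: t {IH Hm} => [|? ?] //=; rewrite Has.
change (set_nth 0 (x :: t) m.+1 (mul z t`_m)) with (x :: set_nth 0 t m (mul z t`_m)).
change (ins m.+1 z (x :: t)) with (x :: ins m z t).
rewrite !P_cons ?ne_cc ?IH ?set_nth_ne //.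
Qed.

Lemma Lset2 (F : fieldType) (A : lmodType F) (mul : A -> A -> A) :
  assoc_mul mul -> forall t m z, (m < size t)%N ->
  nprod mul (set_nth 0 t m (mul (nth 0 t m) z)) = nprod mul (ins m.+1 z t).
Proof.
move=> Has; elim=> [//|x t IH] [|m] z Hm.
  by rewrite /ins /=; case: t {IH Hm} => [|? ?] //=; rewrite Has.
change (set_nth 0 (x :: t) m.+1 (mul t`_m z)) with (x :: set_nth 0 t m (mul t`_m z)).
change (ins m.+2 z (x :: t)) with (x :: ins m.+1 z t).
rewrite !P_cons ?ne_cc ?IH ?set_nth_ne //.
Qed.

Lemma mul0r_ (F : fieldType) (A : lmodType F) (mul : A -> A -> A) :
  bilinear_mul mul -> forall z, mul z 0 = 0 /\ mul 0 z = 0.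
Proof.
move=> [H1 H2] z; split.
  have E := H2 1 0 0 z; rewrite !scale1r addr0 in E.
  apply: (@addrI _ (mul z 0)); rewrite -E; symmetry; exact: addr0.
have E := H1 1 0 0 z; rewrite !scale1r addr0 in E.
apply: (@addrI _ (mul 0 z)); rewrite -E; symmetry; exact: addr0.
Qed.

Lemma mulZr_ (F : fieldType) (A : lmodType F) (mul : A -> A -> A) :
  bilinear_mul mul -> forall c x z, mul z (c *: x) = c *: mul z x.
Proof.
move=> Hb c x z; have [_ H2] := Hb.
by have := H2 c x 0 z; rewrite !addr0 (mul0r_ Hb z).1 addr0.
Qed.

Lemma mulZl_ (F : fieldType) (A : lmodType F) (mul : A -> A -> A) :
  bilinear_mul mul -> forall c x z, mul (c *: x) z = c *: mul x z.
Proof.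
move=> Hb c x z; have [H1 _] := Hb.
by have := H1 c x 0 z; rewrite !addr0 (mul0r_ Hb z).2 addr0.
Qed.

Definition perm_list (F : fieldType) (A : lmodType F) n (sigma : 'S_n) (s : seq A) :=
  [seq nth 0 s (sigma i) | i <- enum 'I_n].

Definition sg n (sigma : 'S_n.+1) (j : nat) : nat := sigma (inord j).
Definition sgi n (sigma : 'S_n.+1) (j : nat) : nat := (sigma^-1)%g (inord j).

Lemma map_enum_inord (T : Type) n (f : 'I_n.+1 -> T) :
  [seq f i | i <- enum 'I_n.+1] = [seq f (inord j) | j <- iota 0 n.+1].
Proof. by rewrite -val_enum_ord -map_comp; apply: eq_map => i /=; rewrite inord_val. Qed.

Lemma size_perm_list (F : fieldType) (A : lmodType F) n (sigma : 'S_n) (s : seq A) :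
  size (perm_list sigma s) = n.
Proof. by rewrite size_map size_enum_ord. Qed.

Lemma nth_perm_list (F : fieldType) (A : lmodType F) n (sigma : 'S_n.+1) (s : seq A) j :
  (j < n.+1)%N -> nth 0 (perm_list sigma s) j = nth 0 s (sg sigma j).
Proof.
move=> Hj; rewrite /perm_list map_enum_inord (nth_map 0) ?size_iota //.
by rewrite nth_iota.
Qed.

Lemma sg_lt n (sigma : 'S_n.+1) j : (sg sigma j < n.+1)%N.
Proof. exact: ltn_ord. Qed.
Lemma sgi_lt n (sigma : 'S_n.+1) j : (sgi sigma j < n.+1)%N.
Proof. exact: ltn_ord. Qed.

Lemma sgiK n (sigma : 'S_n.+1) j : (j < n.+1)%N -> sgi sigma (sg sigma j) = j.
Proof. by move=> Hj; rewrite /sgi /sg inord_val permK inordK. Qed.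
Lemma sgK n (sigma : 'S_n.+1) j : (j < n.+1)%N -> sg sigma (sgi sigma j) = j.
Proof. by move=> Hj; rewrite /sgi /sg inord_val permKV inordK. Qed.

Lemma list_nth_enum (F : fieldType) (A : lmodType F) n (s : seq A) :
  size s = n.+1 -> [seq nth 0 s i | i : 'I_n.+1 <- enum 'I_n.+1] = s.
Proof.
move=> Hs; rewrite map_enum_inord.
transitivity (mkseq (nth 0 s) (size s)); last exact: mkseq_nth.
rewrite Hs /mkseq; apply/eq_in_map => j; rewrite mem_iota add0n => Hj.
by rewrite inordK.
Qed.

Lemma Hid_list (F : fieldType) (A : lmodType F) (mul : A -> A -> A) n
  (sigma : 'S_n.+1) (q : F)
  (Hid : forall a : 'I_n.+1 -> A,
      alg_prod mul a = q *: alg_prod mul (fun i => a (sigma i))) :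
  forall s : seq A, size s = n.+1 -> nprod mul s = q *: nprod mul (perm_list sigma s).
Proof.
move=> s Hs; have := Hid (fun i => nth 0 s i).
by rewrite /alg_prod list_nth_enum.
Qed.

Lemma perm_list_set (F : fieldType) (A : lmodType F) n (sigma : 'S_n.+1)
  (s : seq A) k y : size s = n.+1 -> (k < n.+1)%N ->
  perm_list sigma (set_nth 0 s k y) = set_nth 0 (perm_list sigma s) (sgi sigma k) y.
Proof.
move=> Hs Hk; apply: (@eq_from_nth _ 0).
  by rewrite size_set_nth !size_perm_list (maxn_idPr (sgi_lt _ _)).
rewrite size_perm_list => j Hj.
rewrite nth_perm_list // !nth_set_nth /= nth_perm_list //.
have -> : (sg sigma j == k) = (j == sgi sigma k).
  apply/eqP/eqP => [<-|->]; [by rewrite sgiK | by rewrite sgK].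
by [].
Qed.

Lemma L1 (F : fieldType) (A : lmodType F) (mul : A -> A -> A) n
  (sigma : 'S_n.+1) (q : F) (Has : assoc_mul mul)
  (Hid : forall a : 'I_n.+1 -> A,
      alg_prod mul a = q *: alg_prod mul (fun i => a (sigma i))) :
  forall (s : seq A) k z, size s = n.+1 -> (k < n.+1)%N ->
  nprod mul (ins k z s) = q *: nprod mul (ins (sgi sigma k) z (perm_list sigma s)).
Proof.
move=> s k z Hs Hk.
rewrite -Lset1 ?Hs // (Hid_list Hid); last by rewrite size_set_nth Hs (maxn_idPr Hk).
rewrite perm_list_set // -Lset1 ?size_perm_list ?sgi_lt //.
by rewrite nth_perm_list ?sgi_lt // sgK.
Qed.

Lemma L2 (F : fieldType) (A : lmodType F) (mul : A -> A -> A) n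
  (sigma : 'S_n.+1) (q : F) (Has : assoc_mul mul)
  (Hid : forall a : 'I_n.+1 -> A,
      alg_prod mul a = q *: alg_prod mul (fun i => a (sigma i))) :
  forall (s : seq A) k z, size s = n.+1 -> (k < n.+1)%N ->
  nprod mul (ins k.+1 z s) = q *: nprod mul (ins (sgi sigma k).+1 z (perm_list sigma s)).
Proof.
move=> s k z Hs Hk.
rewrite -Lset2 ?Hs // (Hid_list Hid); last by rewrite size_set_nth Hs (maxn_idPr Hk).
rewrite perm_list_set // -Lset2 ?size_perm_list ?sgi_lt //.
by rewrite nth_perm_list ?sgi_lt // sgK.
Qed.

Lemma L0 (F : fieldType) (A : lmodType F) (mul : A -> A -> A) n
  (sigma : 'S_n.+1) (q : F) (Hb : bilinear_mul mul)
  (Hid : forall a : 'I_n.+1 -> A,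
      alg_prod mul a = q *: alg_prod mul (fun i => a (sigma i))) :
  forall (s : seq A) z, size s = n.+1 ->
  nprod mul (ins 0 z s) = q *: nprod mul (ins 0 z (perm_list sigma s)).
Proof.
move=> s z Hs; rewrite /ins !take0 !drop0 !cat0s !P_cons.
- by rewrite (Hid_list Hid) // mulZr_.
- by rewrite -size_eq0 size_perm_list.
- by rewrite -size_eq0 Hs.
Qed.

Lemma perm_list_surj (F : fieldType) (A : lmodType F) n (sigma : 'S_n.+1)
  (t : seq A) : size t = n.+1 ->
  exists s, size s = n.+1 /\ perm_list sigma s = t.
Proof.
move=> Ht; exists [seq nth 0 t (sgi sigma j) | j <- iota 0 n.+1].
split; first by rewrite size_map size_iota.
apply: (@eq_from_nth _ 0); first by rewrite size_perm_list Ht.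
rewrite size_perm_list => j Hj.
by rewrite nth_perm_list // (nth_map 0) ?size_iota ?sg_lt // nth_iota ?sg_lt // sgiK.
Qed.

Definition beta n (sigma : 'S_n.+1) (m : nat) : nat :=
  if m is m'.+1 then (sgi sigma m').+1 else 0.

Lemma beta_le n (sigma : 'S_n.+1) m : (beta sigma m <= n.+1)%N.
Proof. by case: m => //= m; exact: sgi_lt. Qed.

Lemma Kex (F : fieldType) (A : lmodType F) (mul : A -> A -> A) n
  (sigma : 'S_n.+1) (q : F) (Has : assoc_mul mul) (Hb : bilinear_mul mul)
  (Hid : forall a : 'I_n.+1 -> A,
      alg_prod mul a = q *: alg_prod mul (fun i => a (sigma i)))
  (Hq0 : q != 0) (Hs1 : sigma != 1%g) :
  exists lo hi, (lo < hi)%N /\ (hi <= n.+1)%N /\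
    forall (t : seq A) z, size t = n.+1 -> nprod mul (ins lo z t) = nprod mul (ins hi z t).
Proof.
have Hpos : forall m, (m < n.+1)%N -> forall (t : seq A) z, size t = n.+1 ->
    nprod mul (ins (sgi sigma m) z t) = nprod mul (ins (beta sigma m) z t).
  move=> m Hm t z Ht; have [s [Hs <-]] := perm_list_surj sigma Ht.
  apply: (scalerI Hq0); rewrite -(L1 Has Hid) //.
  case: m Hm => [|m] Hm /=; first by rewrite -(L0 Hb Hid).
  by rewrite -(L2 Has Hid) // ltnW.
have [m Hm Hne] : exists2 m, (m < n.+1)%N & sgi sigma m != beta sigma m.
  case: (boolP [exists m : 'I_n.+1, sgi sigma m != beta sigma m]).
    by case/existsP => m Hm; exists m.
  rewrite negb_exists => /forallP Hall.
  have Hid1 : forall m, (m < n.+1)%N -> sgi sigma m = m.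
    elim=> [|m IH] Hm.
      by have := Hall (inord 0); rewrite inordK // negbK => /eqP ->.
    have := Hall (inord m.+1); rewrite inordK // negbK => /eqP ->.
    by rewrite /= IH // ltnW.
  case/eqP: Hs1; apply/permP => i; rewrite perm1.
  have := Hid1 i (ltn_ord i); rewrite /sgi inord_val => /val_inj Hi.
  by rewrite -{1}Hi permKV.
case: (ltngtP (sgi sigma m) (beta sigma m)) => Hc.
- exists (sgi sigma m), (beta sigma m); split=> //; split; first exact: beta_le.
  exact: Hpos.
- exists (beta sigma m), (sgi sigma m); split=> //; split; first exact: ltnW (sgi_lt _ _).
  by move=> t z Ht; rewrite Hpos.
- by rewrite Hc eqxx in Hne.
Qed.

Definition isP (F : fieldType) (A : lmodType F) (mul : A -> A -> A) (c : nat) (x : A) :=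
  exists s : seq A, size s = c /\ nprod mul s = x.

Lemma isP_mul (F : fieldType) (A : lmodType F) (mul : A -> A -> A) :
  assoc_mul mul -> forall a b x y, (0 < a)%N -> (0 < b)%N ->
  isP mul a x -> isP mul b y -> isP mul (a + b) (mul x y).
Proof.
move=> Has a b x y Ha Hb [s [Hs <-]] [t [Ht <-]]; exists (s ++ t).
rewrite size_cat Hs Ht P_cat // -size_eq0 ?Hs ?Ht -lt0n //.
Qed.

Lemma isP_dec (F : fieldType) (A : lmodType F) (mul : A -> A -> A) :
  assoc_mul mul -> forall c x, isP mul c.+2 x -> isP mul c.+1 x.
Proof.
move=> Has c x [[|y1 [|y2 r]] [Hs <-]] //; exists (mul y1 y2 :: r).
split; last by rewrite P_merge.
by move: Hs => /= [->].
Qed.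

Lemma isP_ge (F : fieldType) (A : lmodType F) (mul : A -> A -> A) :
  assoc_mul mul -> forall a b x, (0 < b)%N -> (b <= a)%N ->
  isP mul a x -> isP mul b x.
Proof.
move=> Has a b x Hb; elim: a => [|a IH] Hba Hx; first by rewrite leqn0 in Hba; rewrite (eqP Hba) in Hb.
case: (ltngtP b a.+1) Hba => // [Hlt|->] _; last by [].
apply: IH => //; case: a Hx Hlt => [|a] Hx Hlt; first by case: b Hb Hlt.
exact: isP_dec.
Qed.

Lemma isP_mulr (F : fieldType) (A : lmodType F) (mul : A -> A -> A) :
  assoc_mul mul -> forall a b x y, (0 < a)%N -> (0 < b)%N ->
  isP mul a x -> isP mul b y -> isP mul b (mul x y).
Proof.
move=> Has a b x y Ha Hb Hx Hy; apply: (isP_ge Has Hb _ (isP_mul Has Ha Hb Hx Hy)).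
exact: leq_addl.
Qed.

Lemma isP_mull (F : fieldType) (A : lmodType F) (mul : A -> A -> A) :
  assoc_mul mul -> forall a b x y, (0 < a)%N -> (0 < b)%N ->
  isP mul a x -> isP mul b y -> isP mul a (mul x y).
Proof.
move=> Has a b x y Ha Hb Hx Hy; apply: (isP_ge Has Ha _ (isP_mul Has Ha Hb Hx Hy)).
exact: leq_addr.
Qed.

Lemma K_list (F : fieldType) (A : lmodType F) (mul : A -> A -> A) N lo hi :
  (lo < hi)%N -> (hi <= N)%N ->
  (forall (t : seq A) z, size t = N -> nprod mul (ins lo z t) = nprod mul (ins hi z t)) ->
  forall (Pl Yl Sl : seq A) z, size Pl = lo -> size Yl = (hi - lo)%N -> size Sl = (N - hi)%N ->
  nprod mul (Pl ++ z :: Yl ++ Sl) = nprod mul (Pl ++ Yl ++ z :: Sl).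
Proof.
move=> Hlh HhN HK Pl Yl Sl z HP HY HS.
have Ht : size (Pl ++ Yl ++ Sl) = N.
  rewrite !size_cat HP HY HS; lia.
have := HK _ z Ht; rewrite /ins take_size_cat // drop_size_cat // => ->.
have HPY : size (Pl ++ Yl) = hi by rewrite size_cat HP HY; lia.
by rewrite catA take_size_cat // drop_size_cat // -catA.
Qed.

Lemma P_x_rcons (F : fieldType) (A : lmodType F) (mul : A -> A -> A) :
  assoc_mul mul -> forall x0 (U : seq A) r, U != [::] ->
  nprod mul (x0 :: rcons U r) = mul x0 (mul (nprod mul U) r).
Proof.
move=> Has x0 U r HU; rewrite P_cons; last by case: U HU.
by rewrite -cats1 P_cat.
Qed.

Lemma Mlem (F : fieldType) (A : lmodType F) (mul : A -> A -> A) N lo hi :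
  assoc_mul mul -> (lo < hi)%N -> (hi <= N)%N ->
  (forall (t : seq A) z, size t = N -> nprod mul (ins lo z t) = nprod mul (ins hi z t)) ->
  forall X Y S z, isP mul lo.+1 X -> isP mul (hi - lo) Y -> isP mul (N - hi).+1 S ->
  mul X (mul z (mul Y S)) = mul X (mul Y (mul z S)).
Proof.
move=> Has Hlh HhN HK X Y S z [[|x0 Pl] [HX <-]] // [Yl [HY <-]] [Sl' [HS <-]].
case/lastP: Sl' HS => [//|Sl r] HS.
have HYne : Yl != [::] by rewrite -size_eq0 HY; lia.
move: HX HS => /= [HX]; rewrite size_rcons => [[HS]].
have Hrne : rcons Sl r != [::] by case: Sl {HS}.
rewrite -(P_cat Has HYne Hrne) -(@P_cons _ _ mul z) ?ne_cc //; last by case: Yl HYne {HY}.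
rewrite -(P_cat Has (isT : x0 :: Pl != [::])); last by [].
rewrite -(@P_cons _ _ mul z (rcons Sl r)) //.
rewrite -(P_cat Has HYne); last by [].
rewrite -(P_cat Has (isT : x0 :: Pl != [::])); last by case: Yl HYne {HY}.
have -> : (x0 :: Pl) ++ z :: Yl ++ rcons Sl r = x0 :: rcons (Pl ++ z :: Yl ++ Sl) r.
  by rewrite -!cats1 /= -catA /= -!catA.
have -> : (x0 :: Pl) ++ Yl ++ z :: rcons Sl r = x0 :: rcons (Pl ++ Yl ++ z :: Sl) r.
  by rewrite -!cats1 /= -catA /= -!catA.
rewrite !P_x_rcons ?ne_cc //; last by case: Pl {HX}; case: Yl HYne {HY}.
by rewrite (K_list Hlh HhN HK).
Qed.

Lemma foldr_P (F : fieldType) (A : lmodType F) (mul : A -> A -> A) :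
  assoc_mul mul -> forall (p : seq A) T, p != [::] ->
  foldr mul T p = mul (nprod mul p) T.
Proof.
move=> Has; elim=> [//|x [|y p] IH] T _ //.
change (foldr mul T [:: x, y & p]) with (mul x (foldr mul T (y :: p))).
by rewrite IH // P_cons // Has.
Qed.

Lemma isP_list (F : fieldType) (A : lmodType F) (mul : A -> A -> A) c :
  assoc_mul mul -> (0 < c)%N -> forall p : seq A, p != [::] ->
  (forall y, y \in p -> isP mul c y) -> isP mul c (nprod mul p).
Proof.
move=> Has Hc; elim=> [//|x [|y p] IH] _ Hall.
  by apply: Hall; rewrite mem_head.
rewrite P_cons //; apply: (isP_mulr Has Hc Hc); first by apply: Hall; rewrite mem_head.
by apply: IH => // z Hz; apply: Hall; rewrite in_cons Hz orbT.
Qed.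

Lemma isP_fold (F : fieldType) (A : lmodType F) (mul : A -> A -> A) c2 c3 :
  assoc_mul mul -> (0 < c2)%N -> (0 < c3)%N -> forall (p : seq A) S,
  (forall y, y \in p -> isP mul c2 y) -> isP mul c3 S -> isP mul c3 (foldr mul S p).
Proof.
move=> Has H2 H3; elim=> [//|x p IH] S Hall HS /=.
apply: (isP_mulr Has H2 H3); first by apply: Hall; rewrite mem_head.
by apply: IH => // z Hz; apply: Hall; rewrite in_cons Hz orbT.
Qed.

Lemma PermL (F : fieldType) (A : lmodType F) (mul : A -> A -> A) c1 c2 c3 :
  assoc_mul mul -> (0 < c1)%N -> (0 < c2)%N -> (0 < c3)%N ->
  (forall X Y S z, isP mul c1 X -> isP mul c2 Y -> isP mul c3 S ->
     mul X (mul z (mul Y S)) = mul X (mul Y (mul z S))) ->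
  forall bs bs' : seq A, perm_eq bs bs' -> (forall y, y \in bs -> isP mul c2 y) ->
  forall X S, isP mul c1 X -> isP mul c3 S ->
  mul X (foldr mul S bs) = mul X (foldr mul S bs').
Proof.
move=> Has H1 H2 H3 HM; elim=> [|x t IH] bs' Hperm Hall X S HX HS.
  by move: Hperm; rewrite perm_sym => /perm_nilP ->.
have xin : x \in bs' by rewrite -(perm_mem Hperm) mem_head.
case/splitPr: xin Hperm => p1 p2 Hperm.
have Hall' : forall y, y \in p1 ++ x :: p2 -> isP mul c2 y.
  by move=> y; rewrite -(perm_mem Hperm); apply: Hall.
have Hx : isP mul c2 x by apply: Hall; rewrite mem_head.
have Step1 : mul X (foldr mul S (p1 ++ x :: p2)) = mul X (mul x (foldr mul S (p1 ++ p2))).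
  rewrite !foldr_cat /=.
  case: p1 Hall' {Hperm} => [//|y p1] Hall'.
  rewrite (@foldr_P _ _ mul Has (y :: p1) (foldr mul S p2)) //.
  rewrite (@foldr_P _ _ mul Has (y :: p1) (mul x (foldr mul S p2))) //.
  apply: esym; apply: HM => //.
    apply: isP_list => // z Hz; apply: Hall'; by rewrite mem_cat Hz.
  apply: (@isP_fold _ _ mul c2 c3 Has H2 H3) => // z Hz; apply: Hall'; by rewrite mem_cat !in_cons Hz !orbT.
rewrite Step1 /= !Has; apply: IH.
- have H2' : perm_eq (p1 ++ x :: p2) (x :: p1 ++ p2) by rewrite -cat1s perm_catCA.
  by rewrite -(perm_cons x); exact: perm_trans Hperm H2'.
- by move=> y Hy; apply: Hall; rewrite in_cons Hy orbT.
- exact: (isP_mull Has H1 H2).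
- exact: HS.
Qed.

Lemma perm_list_perm (F : fieldType) (A : lmodType F) n (sigma : 'S_n.+1) (bs : seq A) :
  size bs = n.+1 -> perm_eq bs (perm_list sigma bs).
Proof.
move=> Hs; rewrite -{1}(list_nth_enum Hs) /perm_list.
have -> : [seq bs`_(sigma i) | i <- enum 'I_n.+1] =
          [seq bs`_(nat_of_ord i) | i <- [seq sigma i | i <- enum 'I_n.+1]].
  by elim: (enum _) => //= ? ? ->.
apply: perm_map; apply: uniq_perm.
- exact: enum_uniq.
- by rewrite map_inj_uniq ?enum_uniq //; exact: perm_inj.
- move=> i; rewrite mem_enum; apply/esym/mapP; exists ((sigma^-1)%g i).
    by rewrite mem_enum.
  by rewrite permKV.
Qed.

Lemma one_sub_q (F : fieldType) (A : lmodType F) (q : F) (v : A) :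
  q != 1 -> v = q *: v -> v = 0.
Proof.
move=> Hq E; have H1q : 1 - q != 0 by rewrite subr_eq0 eq_sym.
apply: (scalerI H1q); rewrite scaler0 scalerBl scale1r -E; exact: subrr.
Qed.

Lemma split_blocks (F : fieldType) (A : lmodType F) (mul : A -> A -> A) c :
  assoc_mul mul -> (0 < c)%N -> forall k (L : seq A), size L = (k.+1 * c)%N ->
  exists bs : seq A, [/\ size bs = k.+1, (forall y, y \in bs -> isP mul c y) &
     nprod mul bs = nprod mul L].
Proof.
move=> Has Hc; elim=> [|k IH] L HL.
  exists [:: nprod mul L]; split => // y; rewrite inE => /eqP ->.
  by exists L; rewrite HL mul1n.
have Hd : size (drop c L) = (k.+1 * c)%N by rewrite size_drop HL mulSn addKn.
have [bs [Hb1 Hb2 Hb3]] := IH (drop c L) Hd.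
exists (nprod mul (take c L) :: bs); split.
- by rewrite /= Hb1.
- move=> y; rewrite in_cons => /orP [/eqP ->|]; last exact: Hb2.
  by exists (take c L); rewrite size_take HL mulSn; case: ltnP => //; lia.
- rewrite P_cons; last by rewrite -size_eq0 Hb1.
  rewrite Hb3 -P_cat ?cat_take_drop //.
    by rewrite -size_eq0 size_take HL mulSn; case: ltnP; lia.
  by rewrite -size_eq0 size_drop HL mulSn; lia.
Qed.

Lemma Zero (F : fieldType) (A : lmodType F) (mul : A -> A -> A) n
  (sigma : 'S_n.+1) (q : F) c1 c2 c3 (Has : assoc_mul mul) (Hb : bilinear_mul mul)
  (Hq : q != 1)
  (Hid : forall a : 'I_n.+1 -> A,
      alg_prod mul a = q *: alg_prod mul (fun i => a (sigma i)))
  (H1 : (0 < c1)%N) (H2 : (0 < c2)%N) (H3 : (0 < c3)%N)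
  (HM : forall X Y S z, isP mul c1 X -> isP mul c2 Y -> isP mul c3 S ->
     mul X (mul z (mul Y S)) = mul X (mul Y (mul z S))) :
  forall X (bs : seq A) S, size bs = n.+1 -> (forall y, y \in bs -> isP mul c2 y) ->
  isP mul c1 X -> isP mul c3 S -> mul X (mul (nprod mul bs) S) = 0.
Proof.
move=> X bs S Hs Hall HX HS; apply: (@one_sub_q _ _ q) => //.
rewrite {1}(Hid_list Hid Hs) mulZl_ // mulZr_ //; congr (_ *: _).
have ne1 : bs != [::] by rewrite -size_eq0 Hs.
have ne2 : perm_list sigma bs != [::] by rewrite -size_eq0 size_perm_list.
rewrite -(@foldr_P _ _ mul Has _ S ne1) -(@foldr_P _ _ mul Has _ S ne2).
apply: esym; exact: (PermL Has H1 H2 H3 HM (perm_list_perm sigma Hs)).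
Qed.

Lemma P_alg_size (F : fieldType) (A : lmodType F) m (a : 'I_m -> A) :
  size [seq a i | i <- enum 'I_m] = m.
Proof. by rewrite size_map size_enum_ord. Qed.

Unset Implicit Arguments. Set Strict Implicit.

Theorem theorem4p4 (F : fieldType) (A : lmodType F) (mul : A -> A -> A)
  (Hbil : bilinear_mul mul) (Hassoc : assoc_mul mul)
  (n : nat) (Hn : (0 < n)%N) (sigma : 'S_n) (q : F) (Hq : q != 1)
  (Hid : forall a : 'I_n -> A,
      alg_prod mul a = q *: alg_prod mul (fun i => a (sigma i))) :
  exists m : nat, (0 < m)%N /\ forall a : 'I_m -> A, alg_prod mul a = 0.
Proof.
case: (eqVneq q 0) => [Hq0|Hq0].
  by exists n; split => // a; rewrite Hid Hq0 scale0r.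
case: (eqVneq sigma 1%g) => [Hs1|Hs1].
  exists n; split => // a; apply: (@one_sub_q _ _ q) => //.
  rewrite {1}Hid; congr (_ *: _); rewrite /alg_prod Hs1; congr nprod.
  by apply: eq_map => i; rewrite perm1.
case: n Hn sigma Hid Hs1 => [//|n] _ sigma Hid Hs1.
have [lo [hi [Hlh [HhN HK]]]] := Kex Hassoc Hbil Hid Hq0 Hs1.
have HM := Mlem Hassoc Hlh HhN HK.
set c1 := lo.+1; set c2 := (hi - lo)%N; set c3 := (n.+1 - hi).+1.
have H1 : (0 < c1)%N by [].
have H2 : (0 < c2)%N by rewrite subn_gt0.
have H3 : (0 < c3)%N by [].
exists (c1 + n.+1 * c2 + c3)%N; split; first by rewrite addn_gt0 addn_gt0 H1.
move=> a; rewrite /alg_prod.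
set L := [seq a i | i <- enum _].
have HL : size L = (c1 + n.+1 * c2 + c3)%N by rewrite /L P_alg_size.
set L1 := take c1 L; set R := drop c1 L.
set L2 := take (n.+1 * c2) R; set L3 := drop (n.+1 * c2) R.
have HR : size R = (n.+1 * c2 + c3)%N by rewrite /R size_drop HL -addnA addKn.
have HL1 : size L1 = c1 by rewrite /L1 size_take HL; case: ltnP => //; lia.
have HL2 : size L2 = (n.+1 * c2)%N by rewrite /L2 size_take HR; case: ltnP => //; lia.
have HL3 : size L3 = c3 by rewrite /L3 size_drop HR addKn.
have -> : L = L1 ++ L2 ++ L3 by rewrite /L1 /L2 /L3 /R !cat_take_drop.
rewrite P_cat ?P_cat //; try by rewrite -size_eq0 ?size_cat ?HL1 ?HL2 ?HL3; lia.
have [bs [Hb1 Hb2 Hb3]] := split_blocks Hassoc H2 HL2.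
rewrite -Hb3.
apply: (Zero Hassoc Hbil Hq Hid H1 H2 H3 HM) => //.
- by exists L1.
- by exists L3.
Qed.
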